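(* Let $X$ be a Noetherian $R$-module such that every $M$-prime submodule $P$ of $X$ is virtually maximal (i.e. $X/P$ is a direct sum of pairwise isomorphic simple modules). Then $X/\mathrm{rad}_M(X)$ is an Artinian $R$-module.
   Context: $R$ is a ring with identity, modules are unital left $R$-modules, $M$ is a fixed left $R$-module. For $N\le M$ and a module $X$, $N\cdot X$ is the intersection of the kernels of all homomorphisms $X\to W$ where $W$ ranges over modules with $f(N)=0$ for all $f\in\mathrm{Hom}_R(M,W)$ (for $Y\le X$, $N\cdot Y$ is formed regarding $Y$ as a module). A proper submodule $P$ of $X$ is $M$-prime if for all $N\le M$, $Y\le X$, $N\cdot Y\subseteq P$ implies $N\cdot X\subseteq P$ or $Y\subseteq P$. $\mathrm{rad}_M(X)$ is the intersection of all $M$-prime submodules of $X$ if $X$ has at least one, and $\mathrm{rad}_M(X)=X$ otherwise. *)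

(* Defs.v *)
(* left modules are [lmodType R] over [R : pzRingType]
   (a possibly non-commutative ring with identity). *)
From HB Require Import structures.
From mathcomp Require Import all_boot all_algebra.
From Stdlib Require Import List.
Set Implicit Arguments.
Unset Strict Implicit.
Unset Printing Implicit Defensive.
Import GRing.Theory.
Local Open Scope ring_scope.

Section ModuleDefs.
Variable R : pzRingType.

Definition submod (X : lmodType R) (S : X -> Prop) : Prop :=
  S 0 /\ forall (a : R) (u v : X), S u -> S v -> S (a *: u + v).

Definition incl (X : lmodType R) (A B : X -> Prop) : Prop :=
  forall x, A x -> B x.

Definition is_hom (A B : lmodType R) (f : A -> B) : Prop :=
  forall (a : R) (u v : A), f (a *: u + v) = a *: f u + f v.

(* A homomorphism from the submodule Y (regarded as a module) to B:
   a function whose restriction to Y is R-linear (values off Y irrelevant). *)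
Definition hom_on (A B : lmodType R) (Y : A -> Prop) (f : A -> B) : Prop :=
  forall (a : R) (u v : A), Y u -> Y v -> f (a *: u + v) = a *: f u + f v.

Definition kills (M : lmodType R) (N : M -> Prop) (W : lmodType R) : Prop :=
  forall f : M -> W, is_hom f -> forall m, N m -> f m = 0.

Definition prodM (M : lmodType R) (N : M -> Prop) (X : lmodType R) (Y : X -> Prop)
  : X -> Prop :=
  fun y => Y y /\
    forall W : lmodType R, kills N W ->
      forall f : X -> W, hom_on Y f -> f y = 0.

Definition fullset (X : lmodType R) : X -> Prop := fun _ => True.

Definition Mprime (M X : lmodType R) (P : X -> Prop) : Prop :=
  submod P /\ (exists x, ~ P x) /\
  forall (N : M -> Prop) (Y : X -> Prop), submod N -> submod Y ->
    incl (prodM N Y) P -> incl (prodM N (@fullset X)) P \/ incl Y P.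

(* rad_M(X): intersection of all M-prime submodules if there is one, else X. *)
Definition radM (M X : lmodType R) : X -> Prop :=
  fun x => (exists P : X -> Prop, Mprime M P) -> forall P, Mprime M P -> P x.

Definition noetherian (X : lmodType R) : Prop :=
  forall C : nat -> X -> Prop, (forall n, submod (C n)) ->
    (forall n, incl (C n) (C n.+1)) ->
    exists n, forall m, (n <= m)%N -> incl (C m) (C n).

(* X/K is Artinian: DCC on submodules of X/K, i.e. (correspondence theorem)
   on submodules of X containing K. *)
Definition artinian_quot (X : lmodType R) (K : X -> Prop) : Prop :=
  forall C : nat -> X -> Prop, (forall n, submod (C n) /\ incl K (C n)) ->
    (forall n, incl (C n.+1) (C n)) ->
    exists n, forall m, (n <= m)%N -> incl (C n) (C m).

Definition simple_mod (S : lmodType R) : Prop :=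
  (exists s : S, s <> 0) /\
  forall T : S -> Prop, submod T -> (forall s, T s -> s = 0) \/ (forall s, T s).

Definition fin_supp (I : Type) (S : lmodType R) (g : I -> S) : Prop :=
  exists l : list I, forall i, ~ In i l -> g i = 0.

(* P is virtually maximal in X: X/P is isomorphic to a direct sum
   (+)_{i in I} S of copies of one simple module S, expressed as a surjective
   homomorphism f : X -> (+)_{i in I} S (elements = finitely supported
   functions I -> S, operations componentwise) whose kernel is exactly P. *)
Definition virtually_maximal (X : lmodType R) (P : X -> Prop) : Prop :=
  exists (S : lmodType R) (I : Type) (f : X -> I -> S),
    simple_mod S /\
    (forall (a : R) (u v : X) (i : I), f (a *: u + v) i = a *: f u i + f v i) /\
    (forall x, fin_supp (f x)) /\
    (forall g : I -> S, fin_supp g -> exists x, forall i, f x i = g i) /\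
    (forall x, (forall i, f x i = 0) <-> P x).

End ModuleDefs.

Arguments radM [R] M X _.

(* Main.v *)
Require Import Defs.
From mathcomp Require Import all_boot all_algebra.
From Stdlib Require Import Classical ClassicalEpsilon.
From Stdlib Require List.
Import List.ListNotations.
Notation In := List.In.
Set Implicit Arguments.
Unset Strict Implicit.
Unset Printing Implicit Defensive.
Import GRing.Theory.
Local Open Scope ring_scope.

Section Helpers.
Variable R : pzRingType.
Variable X : lmodType R.

Lemma sm_add (S : X -> Prop) u v : submod S -> S u -> S v -> S (u + v).
Proof. by move=> [_ H] Su Sv; have := H 1 u v Su Sv; rewrite scale1r. Qed.

Lemma sm_opp (S : X -> Prop) u : submod S -> S u -> S (- u).
Proof.
by move=> [H0 H] Su; have := H (-1) u 0 Su H0; rewrite addr0 scaleN1r.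
Qed.

Lemma sm_sub (S : X -> Prop) u v : submod S -> S u -> S v -> S (u - v).
Proof. by move=> sS Su Sv; apply: sm_add => //; apply: sm_opp. Qed.

Definition Sum (A B : X -> Prop) : X -> Prop :=
  fun z => exists a b, A a /\ B b /\ z = a + b.

Lemma sm_Sum A B : submod A -> submod B -> submod (Sum A B).
Proof.
move=> [A0 HA] [B0 HB]; split; first by exists 0, 0; rewrite addr0.
move=> a u v [a1 [b1 [Ha1 [Hb1 ->]]]] [a2 [b2 [Ha2 [Hb2 ->]]]].
exists (a *: a1 + a2), (a *: b1 + b2); do !split; [exact: HA|exact: HB|].
by rewrite scalerDr addrACA.
Qed.

Lemma sm_I (A B : X -> Prop) : submod A -> submod B -> submod (fun x => A x /\ B x).
Proof.
move=> [A0 HA] [B0 HB]; split => //.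
by move=> a u v [? ?] [? ?]; split; [apply: HA|apply: HB].
Qed.

Lemma sm_full : submod (@fullset R X).
Proof. by []. Qed.

Lemma art_ext (K K' : X -> Prop) : (forall x, K x <-> K' x) ->
  artinian_quot K -> artinian_quot K'.
Proof.
move=> E aK C HC Hd; apply: aK => // n; have [? H] := HC n; split => //.
by move=> x /E; apply: H.
Qed.

Lemma desc_le (C : nat -> X -> Prop) : (forall n, incl (C n.+1) (C n)) ->
  forall n m, (n <= m)%N -> incl (C m) (C n).
Proof.
move=> H n m /subnK <-; elim: (m - n)%N => [|k IH] x //=.
by rewrite addSn => /H /IH.
Qed.

Lemma artI (P Q : X -> Prop) : submod P -> submod Q ->
  artinian_quot P -> artinian_quot Q -> artinian_quot (fun x => P x /\ Q x).
Proof.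
move=> sP sQ aP aQ C HC Hd.
have sC m : submod (C m) by case: (HC m).
have Hdl := desc_le Hd.
pose D m := Sum (C m) Q.
have HDd : forall m, incl (D m.+1) (D m).
  by move=> m x [a [b [Ha [Hb ->]]]]; exists a, b; split => //; apply: Hd.
have HDs : forall m, submod (D m) /\ incl Q (D m).
    move=> m; split; first exact: sm_Sum.
    by move=> q Qq; exists 0, q; do !split => //; [case: (sC m)|rewrite add0r].
have [n1 Hn1] := aQ D HDs HDd.
pose E m := Sum (fun x => C m x /\ Q x) P.
have HEd : forall m, incl (E m.+1) (E m).
  by move=> m x [a [b [[Ha Ha'] [Hb ->]]]]; exists a, b; do !split => //; apply: Hd.
have HEs : forall m, submod (E m) /\ incl P (E m).
    move=> m; split; first by apply: sm_Sum => //; apply: sm_I.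
    move=> p Pp; exists 0, p; do !split => //; last by rewrite add0r.
      by case: (sC m).
    by case: sQ.
have [n2 Hn2] := aP E HEs HEd.
exists (maxn n1 n2) => m Hm x Hx.
have Hn1m : (n1 <= m)%N by apply: leq_trans Hm; apply: leq_maxl.
have Hn2m : (n2 <= m)%N by apply: leq_trans Hm; apply: leq_maxr.
have: D m x.
  apply: Hn1 => //; apply: (desc_le HDd (leq_maxl n1 n2)).
  by exists x, 0; do !split => //; [case: sQ|rewrite addr0].
move=> [c [q [Hc [Hq Exq]]]].
have Hcn : C (maxn n1 n2) c by apply: Hdl Hc.
have Hqn : C (maxn n1 n2) q.
  have -> : q = x - c by rewrite Exq addrC addKr.
  exact: sm_sub.
have: E m q.
  apply: Hn2 => //; apply: (desc_le HEd (leq_maxr n1 n2)).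
  by exists q, 0; do !split => //; [case: sP|rewrite addr0].
move=> [c' [p [[Hc' Qc'] [Hp Eq]]]].
have Hpm : C m p.
  case: (HC m) => _; apply; split => //.
  have -> : p = q - c' by rewrite Eq addrC addKr.
  exact: sm_sub.
rewrite Exq; apply: sm_add => //; rewrite Eq; exact: sm_add.
Qed.

Lemma art_list (L : list (X -> Prop)) :
  (forall P, In P L -> submod P /\ artinian_quot P) ->
  submod (fun x => forall P, In P L -> P x) /\
  artinian_quot (fun x => forall P, In P L -> P x).
Proof.
elim: L => [|P L IH] H.
  split; first by split.
  move=> C HC Hd; exists 0%N => m _ x _; by case: (HC m) => _; apply.
have [sP aP] := H P (or_introl erefl).
have [sL aL] := IH (fun Q HQ => H Q (or_intror HQ)).
have E : forall x, (P x /\ (forall Q, In Q L -> Q x)) <-> (forall Q, In Q (P :: L) -> Q x).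
  move=> x; split; first by move=> [Px HL] Q [<-|/HL].
  by move=> HA; split; [apply: HA; left|move=> Q HQ; apply: HA; right].
split.
  have := sm_I sP sL; move=> [h0 h]; split; first by apply/E.
  by move=> a u v /E Hu /E Hv; apply/E; apply: h.
by apply: (art_ext E); apply: artI.
Qed.

End Helpers.

Lemma choice_fun (A B : Type) (P : A -> B -> Prop) :
  (forall a, exists b, P a b) -> exists g : A -> B, forall a, P a (g a).
Proof.
move=> H; exists (fun a => proj1_sig (constructive_indefinite_description _ (H a))).
by move=> a; case: (constructive_indefinite_description _ (H a)).
Qed.

Section VM.
Variable R : pzRingType.
Variable X : lmodType R.
Variables (S : lmodType R) (I : Type) (f : X -> I -> S).
Hypothesis Hs : simple_mod S.
Hypothesis Hlin : forall (a : R) (u v : X) (i : I), f (a *: u + v) i = a *: f u i + f v i.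
Hypothesis Hsurj : forall g : I -> S, fin_supp g -> exists x, forall i, f x i = g i.

Lemma f0 i : f 0 i = 0.
Proof.
have := Hlin 1 0 0 i; rewrite !scale1r addr0 => e.
have := congr1 (fun t => t - f 0 i) e; rewrite addrK subrr => <- //.
Qed.

Lemma fB x c i : f (x - c) i = f x i - f c i.
Proof.
have -> : x - c = (-1) *: c + x by rewrite scaleN1r addrC.
by rewrite Hlin scaleN1r addrC.
Qed.

Lemma delta_ex i s : exists x, f x i = s /\ forall j, j <> i -> f x j = 0.
Proof.
pose g := fun j => if excluded_middle_informative (j = i) then s else 0.
have [|x Hx] := Hsurj (g := g).
  exists (i :: nil)%list => j Hj; rewrite /g; case: excluded_middle_informative => // e.
  by case: Hj; left.
exists x; split; first by rewrite Hx /g; case: excluded_middle_informative.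
by move=> j Hj; rewrite Hx /g; case: excluded_middle_informative.
Qed.

Lemma art_ker i : artinian_quot (fun x => f x i = 0).
Proof.
move=> C HC Hd.
pose T m := fun s => exists x, C m x /\ f x i = s.
have sC m : submod (C m) by case: (HC m).
have sT m : submod (T m).
  split; first by exists 0; split; [case: (sC m)|exact: f0].
  move=> a u v [x1 [H1 <-]] [x2 [H2 <-]]; exists (a *: x1 + x2); split.
    by case: (sC m) => _; apply.
  by rewrite Hlin.
case: (classic (exists m, forall s, T m s -> s = 0)) => [[m Hm]|Hn].
  exists m => m' _ x Hx; case: (HC m') => _; apply.
  by apply: Hm; exists x.
exists 0%N => m _ x _.
have Hall : forall s, T m s.
  case: Hs => _ /(_ (T m) (sT m)) [H|//]; by case: Hn; exists m.
have [c [Hc Ec]] := Hall (f x i).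
have -> : x = (x - c) + c by rewrite subrK.
apply: sm_add => //; case: (HC m) => _; apply.
by rewrite fB Ec subrr.
Qed.

Lemma fin_index : noetherian X -> exists l : list I, forall i, In i l.
Proof.
move=> HN; apply: NNPP => Hn.
have H : forall l : list I, exists i, ~ In i l.
  by move=> l; apply: NNPP => H; apply: Hn; exists l => i; apply: NNPP => Hi; apply: H; exists i.
have [h Hh] := choice_fun H.
pose L := fun n => iter n (fun l => h l :: l) [::]%list.
pose K := fun n x => forall i, ~ In i (L n) -> f x i = 0.
have HK1 : forall n, submod (K n).
  move=> n; split; first by move=> i _; exact: f0.
  by move=> a u v Hu Hv i Hi; rewrite Hlin Hu // Hv // scaler0 addr0.
have HK2 : forall n, incl (K n) (K n.+1).
  by move=> n x Hx i Hi; apply: Hx => Hi'; apply: Hi; right.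
have [n Hn'] := HN K HK1 HK2.
have [[s Hs0] _] := Hs.
have [x [Hx1 Hx2]] := delta_ex (h (L n)) s.
have : K n x.
  apply: (Hn' n.+1) => // j Hj; apply: Hx2 => e; apply: Hj; left; by rewrite e.
move/(_ (h (L n)) (Hh _)); rewrite Hx1 => e; exact: Hs0 e.
Qed.

End VM.

Lemma art_vm (R : pzRingType) (X : lmodType R) (P : X -> Prop) :
  noetherian X -> virtually_maximal P -> submod P /\ artinian_quot P.
Proof.
move=> HN [S [I [f [Hs [Hlin [Hfs [Hsurj Hker]]]]]]].
have [l Hl] := fin_index Hs Hlin Hsurj HN.
have HL : forall Q, In Q (List.map (fun i x => f x i = 0) l) -> submod Q /\ artinian_quot Q.
  move=> Q /List.in_map_iff [i [<- _]]; split; last exact: art_ker.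
  split; first exact: f0.
  by move=> a u v Hu Hv; rewrite Hlin Hu Hv scaler0 addr0.
have [sL aL] := art_list HL.
have E : forall x, (fun x => forall Q, In Q (List.map (fun i x => f x i = 0) l) -> Q x) x <-> P x.
  move=> x /=; rewrite -Hker; split.
    by move=> H i; apply: (H (fun x => f x i = 0)); apply: List.in_map.
  by move=> H Q /List.in_map_iff [i [<- _]].
split; last exact: (art_ext E).
case: sL => h0 h; split; first by apply/E.
by move=> a u v /E Hu /E Hv; apply/E; apply: h.
Qed.

Section Primes.
Variable R : pzRingType.
Variables M X : lmodType R.

Lemma sm_prodM (N : M -> Prop) (Y : X -> Prop) : submod Y -> submod (prodM N Y).
Proof.
move=> [Y0 HY]; split.
  split => // W _ f hf; have := hf 1 0 0 Y0 Y0; rewrite !scale1r addr0 => e.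
  by have := congr1 (fun t => t - f 0) e; rewrite addrK subrr => <-.
move=> a u v [Yu Hu] [Yv Hv]; split; first exact: HY.
move=> W kW f hf; rewrite hf // (Hu W kW f hf) (Hv W kW f hf).
by rewrite scaler0 addr0.
Qed.

Definition Good (K : X -> Prop) : Prop :=
  exists Ps : list (X -> Prop),
    (forall P, In P Ps -> Mprime M P /\ incl K P) /\
    (forall P, Mprime M P -> incl K P -> exists Q, In Q Ps /\ incl Q P).

Lemma step (K : X -> Prop) : submod K -> ~ Good K ->
  exists K', submod K' /\ incl K K' /\ ~ incl K' K /\ ~ Good K'.
Proof.
move=> sK nG.
case: (classic (Mprime M K)) => [HP|nP].
  case: nG; exists (K :: nil)%list; split.
    by move=> P [<-|//]; split.
  by move=> P _ HKP; exists K; split => //; left.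
case: (classic (forall x, K x)) => [Hall|].
  case: nG; exists nil; split => // P [_ [[x Hx] _]] HKP.
  by case: Hx; apply: HKP.
move=> /not_all_ex_not [x0 Hx0].
have [N [Y [sN [sY [H1 [H2 H3]]]]]] : exists (N : M -> Prop) (Y : X -> Prop), submod N /\ submod Y /\
    incl (prodM N Y) K /\ ~ incl (prodM N (@fullset R X)) K /\ ~ incl Y K.
  apply: NNPP => Hc; apply: nP; split => //; split; first by exists x0.
  move=> N Y sN sY Hi; apply: NNPP => H2; apply: Hc; exists N, Y.
  split => //; split => //; split => //; split => H; apply: H2; [left|right]; exact: H.
pose A := Sum K (prodM N (@fullset R X)).
pose B := Sum K Y.
have sA : submod A by apply: sm_Sum => //; apply: sm_prodM.
have sB : submod B by apply: sm_Sum.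
have KA : incl K A.
  move=> x Kx; exists x, 0; split => //; split; first exact: (sm_prodM N (@sm_full R X)).1.
  by rewrite addr0.
have KB : incl K B.
  move=> x Kx; exists x, 0; split => //; split; first exact: sY.1.
  by rewrite addr0.
case: (classic (Good A)) => [[PA [HA1 HA2]]|nA]; last first.
  exists A; split => //; split => //; split => // H; apply: H2 => y Hy; apply: H.
  exists 0, y; split; first exact: sK.1.
  by split => //; rewrite add0r.
case: (classic (Good B)) => [[PB [HB1 HB2]]|nB]; last first.
  exists B; split => //; split => //; split => // H; apply: H3 => y Hy; apply: H.
  exists 0, y; split; first exact: sK.1.
  by split => //; rewrite add0r.
case: nG; exists (List.app PA PB); split.
  move=> P HP'; case: (List.in_app_or _ _ _ HP') => [/HA1|/HB1] [HP HI]; split => // x Kx; apply: HI.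
    exact: KA.
  exact: KB.
move=> P HP HKP.
have sP : submod P by case: HP.
have [HNP|HYP] := HP.2.2 N Y sN sY (fun x hx => HKP x (H1 x hx)).
  have hA : incl A P.
    by move=> z [a [b [Ha [Hb ->]]]]; apply: sm_add => //; [apply: HKP|apply: HNP].
  have [Q [HQ HQP]] := HA2 P HP hA.
  by exists Q; split => //; apply: List.in_or_app; left.
have hB : incl B P.
  by move=> z [a [b [Ha [Hb ->]]]]; apply: sm_add => //; [apply: HKP|apply: HYP].
have [Q [HQ HQP]] := HB2 P HP hB.
by exists Q; split => //; apply: List.in_or_app; right.
Qed.

Lemma good_all : noetherian X -> forall K : X -> Prop, submod K -> Good K.
Proof.
move=> HN K0 sK0; apply: NNPP => nG0.
have H : forall K : X -> Prop, exists K', (submod K /\ ~ Good K) ->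
    (submod K' /\ incl K K' /\ ~ incl K' K /\ ~ Good K').
  move=> K; case: (classic (submod K /\ ~ Good K)) => [[sK nG]|nH].
    by have [K' HK'] := step sK nG; exists K'.
  by exists K.
have [g Hg] := choice_fun H.
pose C := fun n => iter n g K0.
have inv : forall n, submod (C n) /\ ~ Good (C n).
  elim => [|n [IH1 IH2]]; first by split.
  by have [? [? [? ?]]] := Hg (C n) (conj IH1 IH2); split.
have [n Hn] := HN C (fun n => (inv n).1)
  (fun n => (proj1 (proj2 (Hg (C n) (inv n))))).
have [_ [_ [H3 _]]] := Hg (C n) (inv n).
by apply: H3; apply: (Hn n.+1).
Qed.

End Primes.

Theorem theorem5p9 (R : pzRingType) (M X : lmodType R) :
  noetherian X ->
  (forall P : X -> Prop, Mprime M P -> virtually_maximal P) ->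
  artinian_quot (radM M X).
Proof.
move=> HN Hvm.
have sZ : submod (fun x : X => x = 0).
  by split => // a u v -> ->; rewrite scaler0 addr0.
have [Ps [HP1 HP2]] := good_all M HN sZ.
case: Ps HP1 HP2 => [|P0 Ps] HP1 HP2.
  have Hr : forall x, radM M X x.
    move=> x [P HP]; have sP : submod P by case: HP.
    have [Q [[] _]] := HP2 P HP (fun z e => eq_ind_r P (proj1 sP) e).
  move=> C HC _; exists 0%N => m _ x _; case: (HC m) => _; apply; exact: Hr.
have E : forall x, (fun x => forall P, In P (P0 :: Ps) -> P x) x <-> radM M X x.
  move=> x /=; split.
    move=> H _ P HP; have sP : submod P by case: HP.
    have [Q [HQ HQP]] := HP2 P HP (fun z e => eq_ind_r P (proj1 sP) e).
    by apply: HQP; apply: H.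
  move=> H P HP; have [HPm _] := HP1 P HP.
  by apply: H => //; exists P.
apply: (art_ext E).
have HL : forall P, In P (P0 :: Ps) -> submod P /\ artinian_quot P.
  move=> P HP; have [HPm _] := HP1 P HP; exact: art_vm HN (Hvm P HPm).
exact: (art_list HL).2.
Qed.
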